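(* Let $r\in\mathbb{N}\setminus\{0\}$ and let \[ G=\left\langle a_1,\ldots,a_r,t_1,\ldots,t_r \;\middle|\; a_ia_j=a_ja_i,\ t_it_j=t_jt_i,\ t_i^2=1,\ t_i^{-1}a_jt_i=\begin{cases}a_j & i\neq j\\ a_i^{-1} & i=j\end{cases}\ (1\le i,j\le r)\right\rangle . \] Let $s\in\mathbb{N}\setminus\{0\}$. Then $\alpha_{G\times\mathbb{Z}^s}\sim (n\mapsto n^{r+1})$. In particular, for every $m,k\in\mathbb{N}\setminus\{0\}$ with $m\geq k$, there is a virtually abelian group of rank $m$ whose automorphic growth rate is $n\mapsto n^k$.
   Context: For a finitely generated group $G$ with finite generating set $\Sigma$, the automorphic growth function $\alpha_{G,\Sigma}\colon\mathbb{N}\to\mathbb{N}$ sends $n$ to the number of orbits of the natural action of $\operatorname{Aut}(G)$ on $G$ that contain an element of word length at most $n$ with respect to $\Sigma$. For non-decreasing non-zero functions $f,g\colon\mathbb{N}\to\mathbb{N}$ write $f\preccurlyeq g$ if there is $\lambda\in\mathbb{N}\setminus\{0\}$ with $f(n)\le\lambda g(\lambda n+\lambda)+\lambda$ for all $n$, and $f\sim g$ if $f\preccurlyeq g$ and $g\preccurlyeq f$. The $\sim$-class of $\alpha_{G,\Sigma}$ does not depend on $\Sigma$ and is denoted $\alpha_G$ (the automorphic growth rate). The rank of a finitely generated virtually abelian group is the rank of a finite-index free abelian subgroup. *)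

(* Defs.v *)
(* Abstract (possibly infinite) groups are encoded by a small
   record [Grp]; group presentations are encoded by their universal property. *)
From mathcomp Require Import all_boot all_order all_algebra.
Set Implicit Arguments. Unset Strict Implicit. Unset Printing Implicit Defensive.
Import GRing.Theory.
Local Open Scope ring_scope.

Record Grp := MkGrp {
  gcar :> Type;
  gmul : gcar -> gcar -> gcar;
  ginv : gcar -> gcar;
  gone : gcar;
  gmulA : forall x y z, gmul x (gmul y z) = gmul (gmul x y) z;
  gmul1 : forall x, gmul gone x = x;
  gmulV : forall x, gmul (ginv x) x = gone }.

Arguments gmul {g}. Arguments ginv {g}. Arguments gone {g}.

Definition zmodGrp (V : zmodType) : Grp :=
  @MkGrp V +%R -%R 0 (@addrA V) (@add0r V) (@addNr V).

Definition ZnGrp (s : nat) : Grp := zmodGrp 'rV[int]_s.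

Section Prod.
Variables G H : Grp.
Definition pmul (x y : G * H) : G * H := (gmul x.1 y.1, gmul x.2 y.2).
Definition pinv (x : G * H) : G * H := (ginv x.1, ginv x.2).
Definition pone : G * H := (gone, gone).
Lemma pmulA x y z : pmul x (pmul y z) = pmul (pmul x y) z.
Proof. by rewrite /pmul /= !gmulA. Qed.
Lemma pmul1 x : pmul pone x = x.
Proof. by case: x => a b; rewrite /pmul /= !gmul1. Qed.
Lemma pmulV x : pmul (pinv x) x = pone.
Proof. by rewrite /pmul /= !gmulV. Qed.
Definition prodGrp : Grp := MkGrp pmulA pmul1 pmulV.
End Prod.

Definition letter (G : Grp) (S : seq G) (l : nat * bool) : G :=
  if l.2 then ginv (nth gone S l.1) else nth gone S l.1.

Definition evalw (G : Grp) (S : seq G) (w : seq (nat * bool)) : G :=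
  foldr (fun l acc => gmul (letter S l) acc) gone w.

Definition ball (G : Grp) (S : seq G) (n : nat) (x : G) : Prop :=
  exists w : seq (nat * bool),
    [/\ all (fun l => l.1 < size S)%N w, (size w <= n)%N & evalw S w = x].

Definition generates (G : Grp) (S : seq G) : Prop :=
  forall x : G, exists n, ball S n x.

Definition is_hom (G H : Grp) (f : G -> H) : Prop :=
  forall x y, f (gmul x y) = gmul (f x) (f y).

Definition is_aut (G : Grp) (f : G -> G) : Prop := is_hom f /\ bijective f.

Definition aut_equiv (G : Grp) (x y : G) : Prop :=
  exists f : G -> G, is_aut f /\ f x = y.

Definition orbit_count (G : Grp) (S : seq G) (n N : nat) : Prop :=
  exists c : 'I_N -> G,
    [/\ forall i, ball S n (c i),
        forall i j, aut_equiv (c i) (c j) -> i = j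
      & forall x, ball S n x -> exists i, aut_equiv x (c i)].

Definition autgrowth (G : Grp) (S : seq G) (alpha : nat -> nat) : Prop :=
  forall n, orbit_count S n (alpha n).

Definition gprec (f g : nat -> nat) : Prop :=
  exists lam : nat, (0 < lam)%N /\
    forall n, (f n <= lam * g (lam * n + lam) + lam)%N.

Definition gsim (f g : nat -> nat) : Prop := gprec f g /\ gprec g f.

Definition autgrowth_rate_sim (G : Grp) (g : nat -> nat) : Prop :=
  forall S : seq G, generates S ->
    exists alpha, autgrowth S alpha /\ gsim alpha g.

Definition Grels (r : nat) (H : Grp) (a t : 'I_r -> H) : Prop :=
  [/\ forall i j, gmul (a i) (a j) = gmul (a j) (a i),
      forall i j, gmul (t i) (t j) = gmul (t j) (t i),
      forall i, gmul (t i) (t i) = gone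
    & forall i j, gmul (ginv (t i)) (gmul (a j) (t i)) =
                  (if i == j then ginv (a i) else a j)].

Definition presents (r : nat) (G : Grp) (a t : 'I_r -> G) : Prop :=
  [/\ generates ([seq a i | i <- enum 'I_r] ++ [seq t i | i <- enum 'I_r]),
      Grels a t
    & forall (H : Grp) (b u : 'I_r -> H), Grels b u ->
        exists f : G -> H, [/\ is_hom f, forall i, f (a i) = b i
                                       & forall i, f (t i) = u i]].

Definition fin_gen (H : Grp) : Prop := exists S : seq H, generates S.

Definition virt_abelian_rank (H : Grp) (m : nat) : Prop :=
  exists f : ZnGrp m -> H,
    [/\ is_hom f, injective f &
        exists p (c : 'I_p -> H), forall h : H,
          exists i (v : ZnGrp m), h = gmul (c i) (f v)].

(* Main.v *)
Require Import Defs.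
From mathcomp Require Import all_boot all_order all_algebra zify ring.
From Stdlib Require Import ClassicalEpsilon FunctionalExtensionality Classical.
Set Implicit Arguments. Unset Strict Implicit. Unset Printing Implicit Defensive.

Section GrpLemmas.
Variable G : Grp.
Implicit Types x y z : G.

Lemma gmulVr x : gmul x (ginv x) = gone.
Proof.
rewrite -[gmul x (ginv x)]gmul1 -(gmulV (ginv x)) -gmulA.
by rewrite (gmulA (ginv x) x) gmulV gmul1 gmulV.
Qed.

Lemma gmulr1 x : gmul x gone = x.
Proof. by rewrite -(gmulV x) gmulA gmulVr gmul1. Qed.

Lemma gmulK x y : gmul (ginv x) (gmul x y) = y.
Proof. by rewrite gmulA gmulV gmul1. Qed.

Lemma gmulKV x y : gmul x (gmul (ginv x) y) = y.
Proof. by rewrite gmulA gmulVr gmul1. Qed.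

Lemma gmul_linj x y z : gmul x y = gmul x z -> y = z.
Proof. by move=> H; rewrite -(gmulK x y) H gmulK. Qed.

Lemma gmul_rinj x y z : gmul y x = gmul z x -> y = z.
Proof.
by move=> H; rewrite -(gmulr1 y) -(gmulVr x) gmulA H -gmulA gmulVr gmulr1.
Qed.

Lemma ginvK x : ginv (ginv x) = x.
Proof. by apply: (@gmul_rinj (ginv x)); rewrite gmulV gmulVr. Qed.

Lemma ginvM x y : ginv (gmul x y) = gmul (ginv y) (ginv x).
Proof.
apply: (@gmul_rinj (gmul x y)); rewrite gmulV -gmulA (gmulA (ginv x)) gmulV.
by rewrite gmul1 gmulV.
Qed.

Lemma ginv1 : ginv (gone : G) = gone.
Proof. by rewrite -[ginv gone]gmulr1 gmulV. Qed.

Lemma inv_uniq x y : gmul x y = gone -> ginv x = y.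
Proof. by move=> H; apply: (@gmul_linj x); rewrite gmulVr H. Qed.

Lemma evalw_cat (S : seq G) w1 w2 :
  evalw S (w1 ++ w2) = gmul (evalw S w1) (evalw S w2).
Proof.
elim: w1 => [|l w IH] /=; first by rewrite gmul1.
by rewrite IH gmulA.
Qed.

Definition invw (w : seq (nat * bool)) := rev [seq (l.1, ~~ l.2) | l <- w].

Lemma letter_inv (S : seq G) l : letter S (l.1, ~~ l.2) = ginv (letter S l).
Proof. by rewrite /letter /=; case: l.2 => //=; rewrite ginvK. Qed.

Lemma evalw_inv (S : seq G) w : evalw S (invw w) = ginv (evalw S w).
Proof.
elim: w => [|l w IH] /=; first by rewrite ginv1.
rewrite /invw /= rev_cons -cats1 evalw_cat -/(invw w) IH /= gmulr1 ginvM.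
by rewrite letter_inv.
Qed.

Lemma ball_mon (S : seq G) n m x : (n <= m)%N -> ball S n x -> ball S m x.
Proof.
move=> le [w [H1 H2 H3]]; exists w; split=> //; exact: leq_trans le.
Qed.

Lemma ball_one (S : seq G) n : ball S n gone.
Proof. by exists [::]. Qed.

Lemma ball_mul (S : seq G) n m x y :
  ball S n x -> ball S m y -> ball S (n + m) (gmul x y).
Proof.
move=> [w [H1 H2 H3]] [w' [H1' H2' H3']]; exists (w ++ w'); split.
- by rewrite all_cat H1 H1'.
- by rewrite size_cat leq_add.
- by rewrite evalw_cat H3 H3'.
Qed.

Lemma ball_inv (S : seq G) n x : ball S n x -> ball S n (ginv x).
Proof.
move=> [w [H1 H2 H3]]; exists (invw w); split.
- rewrite /invw all_rev all_map; apply: sub_all H1 => l //.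
- by rewrite /invw size_rev size_map.
- by rewrite evalw_inv H3.
Qed.

Lemma ball_gen (S : seq G) i : (i < size S)%N -> ball S 1 (nth gone S i).
Proof.
move=> Hi; exists [:: (i, false)]; split => //=; first by rewrite Hi.
by rewrite /letter /= gmulr1.
Qed.

Lemma ball_letter (S : seq G) n l :
  (l.1 < size S)%N -> ball S n.+1 (letter S l) .
Proof.
move=> Hi; apply: (@ball_mon _ 1) => //; rewrite /letter; case: l.2.
- exact/ball_inv/ball_gen.
- exact: ball_gen.
Qed.

Lemma ball_sub (S S' : seq G) L :
  (forall i, (i < size S')%N -> ball S L (nth gone S' i)) ->
  forall n x, ball S' n x -> ball S (L * n) x.
Proof.
move=> HL n x [w [H1 H2 H3]]; subst x.
elim: w n H1 H2 => [|l w IH] n /=; first by move=> *; apply: ball_one.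
move=> /andP [Hl Hw]; case: n => // n Hs.
rewrite mulnS; apply: ball_mul; last exact: IH.
rewrite /letter; case: l.2 Hl => /= Hl.
- exact/ball_inv/HL.
- exact: HL.
Qed.

End GrpLemmas.

Section Homs.
Variables G H : Grp.

Lemma hom_one (f : G -> H) : is_hom f -> f gone = gone.
Proof.
move=> hf; apply: (@gmul_linj _ (f gone)); by rewrite -hf gmul1 gmulr1.
Qed.

Lemma hom_inv (f : G -> H) x : is_hom f -> f (ginv x) = ginv (f x).
Proof.
move=> hf; symmetry; apply: inv_uniq; by rewrite -hf gmulVr hom_one.
Qed.

Lemma hom_evalw (f : G -> H) (S : seq G) w : is_hom f ->
  f (evalw S w) = evalw (map f S) w.
Proof.
move=> hf; elim: w => [|l w IH] /=; first exact: hom_one.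
rewrite hf IH; congr gmul; rewrite /letter.
have E : f (nth gone S l.1) = nth gone (map f S) l.1.
  case: (ltnP l.1 (size S)) => Hl; first by rewrite (nth_map gone).
  by rewrite !nth_default ?size_map // hom_one.
by case: l.2 => /=; rewrite ?(hom_inv _ hf) E.
Qed.

Lemma hom_inverse (f : G -> H) (g : H -> G) :
  is_hom f -> cancel f g -> cancel g f -> is_hom g.
Proof.
move=> hf fK gK x y; apply: (can_inj fK); by rewrite hf !gK.
Qed.

Lemma ball_hom (f : G -> H) (S : seq G) n x :
  is_hom f -> ball S n x -> ball (map f S) n (f x).
Proof.
move=> hf [w [H1 H2 H3]]; exists w; split=> //.
- by rewrite size_map.
- by rewrite -H3 hom_evalw.
Qed.
End Homs.

Section AutEq.
Variable G : Grp.

Lemma aut_refl (x : G) : aut_equiv x x.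
Proof. exists id; split=> //; split=> //; exists id => //. Qed.

Lemma aut_inv (f : G -> G) : is_aut f ->
  exists g, [/\ is_aut g, cancel f g & cancel g f].
Proof.
move=> [hf [g fK gK]]; exists g; split=> //; split.
- exact: hom_inverse hf fK gK.
- by exists f.
Qed.

Lemma aut_sym (x y : G) : aut_equiv x y -> aut_equiv y x.
Proof.
move=> [f [af fx]]; have [g [ag fK gK]] := aut_inv af.
by exists g; split=> //; rewrite -fx fK.
Qed.

Lemma aut_trans (x y z : G) : aut_equiv x y -> aut_equiv y z -> aut_equiv x z.
Proof.
move=> [f [[hf bf] fx]] [g [[hg bg] gy]]; exists (g \o f); split.
- split; first by move=> u v /=; rewrite hf hg.
  exact: bij_comp.
- by rewrite /= fx gy.
Qed.
End AutEq.

Section Counting.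
Variable G : Grp.

Lemma reps_exist (A : eqType) (h : A -> G) (L : seq A) :
  exists N (c : 'I_N -> G),
    [/\ forall i, exists a, a \in L /\ h a = c i,
        forall i j, aut_equiv (c i) (c j) -> i = j
      & forall a, a \in L -> exists i, aut_equiv (h a) (c i)].
Proof.
elim: L => [|x L [N [c [H1 H2 H3]]]].
  exists 0, (fun _ => gone).
  by split=> [[]|[]|].
case: (classic (exists i, aut_equiv (h x) (c i))) => [[i0 Hi0]|Hno].
  exists N, c; split=> //.
  - by move=> i; have [a [Ha Ea]] := H1 i; exists a; rewrite inE Ha orbT.
  - move=> a; rewrite inE => /orP [/eqP->|Ha]; first by exists i0.
    exact: H3.
pose c' (i : 'I_N.+1) := if @insub _ (fun k => k < N)%N _ (val i) is Some j then c j else h x.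
exists N.+1, c'; split.
- move=> i; rewrite /c'; case: insubP => [j _ _|_].
  + by have [a [Ha Ea]] := H1 j; exists a; rewrite inE Ha orbT.
  + by exists x; rewrite inE eqxx.
- move=> i j; rewrite /c'.
  case: insubP => [i' Hi Ei|Hi]; case: insubP => [j' Hj Ej|Hj] Heq.
  + by apply: val_inj; rewrite -Ei -Ej (H2 _ _ Heq).
  + by exfalso; apply: Hno; exists i'; apply: aut_sym.
  + by exfalso; apply: Hno; exists j'.
  + apply: val_inj; have := ltn_ord i; have := ltn_ord j.
    rewrite !ltnS leq_eqVlt (negbTE Hj) orbF => /eqP Ej.
    move=> Hle; have /eqP Ei : (val i == N) by rewrite eqn_leq Hle leqNgt.
    by rewrite Ei; symmetry; exact: Ej.
- move=> a; rewrite inE => /orP [/eqP->|Ha].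
  + exists ord_max; rewrite /c'; case: insubP => [j /= |]; first by rewrite ltnn.
    by move=> _; apply: aut_refl.
  + have [i Hi] := H3 a Ha; exists (widen_ord (leqnSn N) i); rewrite /c'.
    case: insubP => [j _ Ej|] /=; last by rewrite ltn_ord.
    by have -> : j = i by apply: val_inj.
Qed.

Definition alphabet k : seq (nat * bool) :=
  [seq (i, b) | i <- iota 0 k, b <- [:: true; false]].

Fixpoint words k n : seq (seq (nat * bool)) :=
  if n is n'.+1 then [::] :: [seq l :: w | l <- alphabet k, w <- words k n']
  else [:: [::]].

Lemma words_complete k n w :
  all (fun l => l.1 < k)%N w -> (size w <= n)%N -> w \in words k n.
Proof.
elim: n w => [|n IH] [|l w] //= /andP [Hl Hw] Hs.
rewrite inE; apply/orP; right; apply: (allpairs_f (fun l w => l :: w)).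
- case: l Hl => i b /= Hi; apply: (allpairs_f (fun i b => (i, b))).
  + by rewrite mem_iota.
  + by case: b.
- exact: IH.
Qed.

Lemma words_sound k n w : w \in words k n ->
  all (fun l => l.1 < k)%N w /\ (size w <= n)%N.
Proof.
elim: n w => [|n IH] w /=; first by rewrite inE => /eqP ->.
rewrite inE => /orP [/eqP -> //|/allpairsP [[l w'] /= [Hl Hw' ->]]].
have [H1 H2] := IH _ Hw'; split=> //=; rewrite H1 andbT.
by move: Hl => /allpairsP [[i b] /= [Hi _ ->]]; rewrite mem_iota in Hi.
Qed.

Lemma orbit_count_ex (S : seq G) n : exists N, orbit_count S n N.
Proof.
have [N [c [H1 H2 H3]]] := reps_exist (evalw S) (words (size S) n).
exists N, c; split=> //.
- move=> i; have [w [Hw Ew]] := H1 i; have [Ha Hs] := words_sound Hw.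
  by exists w.
- move=> x [w [Ha Hs Ew]]; rewrite -Ew; apply: H3; exact: words_complete.
Qed.

Definition agrowth (S : seq G) n : nat :=
  proj1_sig (constructive_indefinite_description _ (orbit_count_ex S n)).

Lemma agrowthP (S : seq G) : autgrowth S (agrowth S).
Proof.
move=> n; rewrite /agrowth; case: constructive_indefinite_description => //.
Qed.

Lemma count_upper (S : seq G) n N (T : finType) (code : G -> T) :
  (forall x y, ball S n x -> ball S n y -> code x = code y -> aut_equiv x y) ->
  orbit_count S n N -> (N <= #|T|)%N.
Proof.
move=> Hc [c [H1 H2 H3]].
have inj : injective (fun i => code (c i)).
  by move=> i j E; apply: H2; apply: Hc.
by have := leq_card _ inj; rewrite card_ord.
Qed.

Lemma count_lower (S : seq G) n N (T : finType) (h : T -> G) :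
  (forall a, ball S n (h a)) ->
  (forall a b, aut_equiv (h a) (h b) -> a = b) ->
  orbit_count S n N -> (#|T| <= N)%N.
Proof.
move=> Hb Hi [c [H1 H2 H3]].
have F a : {i | aut_equiv (h a) (c i)}.
  by apply: constructive_indefinite_description; apply: H3.
have inj : injective (fun a => proj1_sig (F a)).
  move=> a b E; apply: Hi; case: (F a) E => i Hi' /=; case: (F b) => j Hj /= E.
  by subst j; apply: aut_trans Hi' (aut_sym Hj).
by have := leq_card _ inj; rewrite card_ord.
Qed.

Lemma count_mono (S S' : seq G) n m N N' :
  (forall x, ball S n x -> ball S' m x) ->
  orbit_count S n N -> orbit_count S' m N' -> (N <= N')%N.
Proof.
move=> Hsub [c [H1 H2 H3]] HN'.
have := count_lower (S:=S') (n:=m) (N:=N') (h:=c); rewrite card_ord; apply => //.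
by move=> i; apply: Hsub; apply: H1.
Qed.

End Counting.

Lemma aut_transport (G H : Grp) (F : G -> H) (Fi : H -> G) :
  is_hom F -> cancel F Fi -> cancel Fi F ->
  forall x y, aut_equiv x y -> aut_equiv (F x) (F y).
Proof.
move=> hF FK FiK x y [f [[hf [g fK gK]] fx]].
have hFi := hom_inverse hF FK FiK.
exists (F \o f \o Fi); split; last by rewrite /= FK fx.
split.
- by move=> u v /=; rewrite hFi hf hF.
- exists (F \o g \o Fi) => u /=; by rewrite ?FK ?fK ?gK ?FiK.
Qed.

Lemma rate_transport (G H : Grp) (F : G -> H) (Fi : H -> G) g :
  is_hom F -> cancel F Fi -> cancel Fi F ->
  autgrowth_rate_sim H g -> autgrowth_rate_sim G g.
Proof.
move=> hF FK FiK HH S genS.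
have hFi := hom_inverse hF FK FiK.
have genS' : generates (map F S).
  move=> y; have [n Hn] := genS (Fi y); exists n; rewrite -(FiK y).
  exact: ball_hom.
have [alpha [Ha Hsim]] := HH _ genS'; exists alpha; split => // n.
have [c [H1 H2 H3]] := Ha n; exists (Fi \o c); split.
- move=> i /=; have := ball_hom hFi (H1 i); by rewrite (mapK FK).
- move=> i j /= E; apply: H2; have := aut_transport hF FK FiK E; by rewrite !FiK.
- move=> x Hx; have [i Hi] := H3 _ (ball_hom hF Hx); exists i.
  by have := aut_transport hFi FiK FK Hi; rewrite FK.
Qed.

Lemma expn_mono e m n : (m <= n)%N -> (m ^ e <= n ^ e)%N.
Proof. move=> le; elim: e => // e IH; rewrite !expnS leq_mul //. Qed.

Lemma uniform_ball (K : Grp) (S0 : seq K) : generates S0 ->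
  forall S : seq K, exists L, forall i, (i < size S)%N -> ball S0 L (nth gone S i).
Proof.
move=> gen S.
suff H k : exists L, forall i, (i < k)%N -> ball S0 L (nth gone S i).
  exact: H.
elim: k => [|k [L HL]]; first by exists 0.
have [n Hn] := gen (nth gone S k); exists (maxn L n) => i.
rewrite ltnS leq_eqVlt => /orP [/eqP ->|Hi].
- by apply: ball_mon Hn; rewrite leq_maxr.
- by apply: ball_mon (HL _ Hi); rewrite leq_maxl.
Qed.

Lemma rate_from_bounds (K : Grp) (S0 : seq K) (e : nat) :
  generates S0 ->
  (exists C, forall N, exists (T : finType) (code : K -> T),
      (#|T| <= C * (N.+1) ^ e)%N /\
      forall x y, ball S0 N x -> ball S0 N y -> code x = code y -> aut_equiv x y) ->
  (exists C, forall M, exists (T : finType) (h : T -> K),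
      [/\ (M ^ e <= #|T|)%N, forall a, ball S0 (C * M) (h a)
        & forall a b, aut_equiv (h a) (h b) -> a = b]) ->
  autgrowth_rate_sim K (fun n => n ^ e)%N.
Proof.
move=> gen0 [C1 Hup] [C2 Hlow] S genS.
have [L1 HL1] := uniform_ball gen0 S.
have [L2 HL2] := uniform_ball genS S0.
exists (agrowth S); split; first exact: agrowthP.
split.
- exists (maxn 1 (maxn C1 L1)); split; first by rewrite leq_maxl.
  move=> n; set lam := maxn 1 (maxn C1 L1).
  have [T [code [HT Hc]]] := Hup (L1 * n).
  have := @count_upper K S n (agrowth S n) T code.
  have sub := ball_sub HL1.
  move=> /(_ (fun x y hx hy => Hc x y (sub _ _ hx) (sub _ _ hy)) (agrowthP S n)) Hn.
  apply: leq_trans Hn _; apply: leq_trans HT _; apply: leq_trans (leq_addr _ _).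
  apply: leq_mul; first by rewrite /lam leq_max leq_maxl orbT.
  apply: expn_mono; rewrite -addn1 leq_add //.
  + by rewrite leq_mul2r /lam leq_max (leq_max L1) leqnn !orbT.
  + by rewrite /lam leq_maxl.
- exists (maxn 1 (L2 * C2)); split; first by rewrite leq_maxl.
  move=> n; set lam := maxn 1 (L2 * C2).
  have [T [h [HT Hb Hi]]] := Hlow n.
  have sub := ball_sub HL2.
  have H1 := @count_lower K S (L2 * (C2 * n)) _ T h (fun a => sub _ _ (Hb a)) Hi
               (agrowthP S _).
  have H2 : (agrowth S (L2 * (C2 * n)) <= agrowth S (lam * n + lam))%N.
    apply: (count_mono _ (agrowthP S _) (agrowthP S _)).
    move=> x; apply: ball_mon; apply: leq_trans (leq_addr _ _).
    by rewrite mulnA leq_mul2r /lam leq_maxr orbT.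
  apply: leq_trans HT _; apply: leq_trans H1 _; apply: leq_trans H2 _.
  apply: leq_trans (leq_addr _ _); rewrite -{1}(mul1n (agrowth _ _)) leq_mul2r.
  by rewrite /lam leq_maxl orbT.
Qed.

Import GRing.Theory Num.Theory.
Local Open Scope ring_scope.

(* infinite dihedral group as int * bool *)
Definition dmul (x y : int * bool) : int * bool :=
  (x.1 + (if x.2 then - y.1 else y.1), x.2 (+) y.2).
Definition dinv (x : int * bool) : int * bool :=
  (if x.2 then x.1 else - x.1, x.2).
Definition done : int * bool := (0, false).

Lemma dmulA x y z : dmul x (dmul y z) = dmul (dmul x y) z.
Proof.
case: x y z => [k b] [l c] [m d]; rewrite /dmul /=; congr pair.
- by case: b; case: c => /=; ring.
- by rewrite addbA.
Qed.
Lemma dmul1 x : dmul done x = x.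
Proof. by case: x => k b; rewrite /dmul /= add0r. Qed.
Lemma dmulV x : dmul (dinv x) x = done.
Proof. by case: x => k [] /=; rewrite /dmul /= ?addrN ?addNr ?addbb. Qed.

Section Model.
Variable r : nat.
Definition Mcar := 'I_r -> int * bool.
Definition mmul (x y : Mcar) : Mcar := fun p => dmul (x p) (y p).
Definition minv (x : Mcar) : Mcar := fun p => dinv (x p).
Definition mone : Mcar := fun _ => done.
Lemma mmulA x y z : mmul x (mmul y z) = mmul (mmul x y) z.
Proof. apply: functional_extensionality => p; exact: dmulA. Qed.
Lemma mmul1 x : mmul mone x = x.
Proof. apply: functional_extensionality => p; exact: dmul1. Qed.
Lemma mmulV x : mmul (minv x) x = mone.
Proof. apply: functional_extensionality => p; exact: dmulV. Qed.
Definition Mgrp : Grp := MkGrp mmulA mmul1 mmulV.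
End Model.

Definition Kgrp r s := prodGrp (Mgrp r) (ZnGrp s).

Section Concrete.
Variables r s : nat.
Local Notation K := (Kgrp r s).

Lemma Kmul_eq (x y : K) : gmul x y = (mmul x.1 y.1, x.2 + y.2).
Proof. by []. Qed.
Lemma Kinv_eq (x : K) : ginv x = (minv x.1, - x.2).
Proof. by []. Qed.
Lemma Kone_eq : (gone : K) = (@mone r, 0).
Proof. by []. Qed.

Definition dnorm (x : int * bool) : nat := (`|x.1| + x.2)%N.
Definition knorm (x : K) : nat :=
  (\sum_(p < r) dnorm (x.1 p) + \sum_(j < s) `|x.2 ord0 j|)%N.

Definition Apow (i : nat) (z : int) : K :=
  (fun p => if val p == i then (z, false) else done, 0).
Definition Tg (i : nat) : K :=
  (fun p => if val p == i then (0, true) else done, 0).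
Definition Epow (j : nat) (z : int) : K :=
  (@mone r, \row_(q < s) if val q == j then z else 0).

Definition gen (i : nat) : K :=
  if (i < r)%N then Apow i 1 else if (i < r + r)%N then Tg (i - r)
  else Epow (i - r - r) 1.

Definition S0 : seq K := map gen (iota 0 (r + r + s)).

Lemma nth_S0 i : (i < r + r + s)%N -> nth gone S0 i = gen i.
Proof.
by move=> Hi; rewrite /S0 (nth_map 0%N) ?size_iota // nth_iota.
Qed.

Lemma size_S0 : size S0 = (r + r + s)%N.
Proof. by rewrite size_map size_iota. Qed.

Definition isgen (g : K) : Prop :=
  (exists2 i, (i < r)%N & (g = Apow i 1 \/ g = Apow i (-1) \/ g = Tg i)) \/
  (exists2 j, (j < s)%N & (g = Epow j 1 \/ g = Epow j (-1))).

Lemma ginv_Apow i z : ginv (Apow i z) = Apow i (- z).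
Proof.
rewrite Kinv_eq /Apow /=; congr pair; last by rewrite oppr0.
apply: functional_extensionality => p; rewrite /minv; case: ifP => _ //=.
all: by rewrite /dinv /= ?oppr0.
Qed.

Lemma ginv_Tg i : ginv (Tg i) = Tg i.
Proof.
rewrite Kinv_eq /Tg /=; congr pair; last by rewrite oppr0.
apply: functional_extensionality => p; rewrite /minv; case: ifP => _ //=.
all: by rewrite /dinv /= ?oppr0.
Qed.

Lemma ginv_Epow j z : ginv (Epow j z) = Epow j (- z).
Proof.
rewrite Kinv_eq /Epow /=; congr pair.
- apply/matrixP => a b; rewrite !mxE; case: ifP => //; by rewrite oppr0.
Qed.

Lemma isgen_inv g : isgen g -> isgen (ginv g).
Proof.
case=> [[i Hi [->|[->|->]]]|[j Hj [->|->]]].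
- by left; exists i => //; rewrite ginv_Apow; right; left.
- by left; exists i => //; rewrite ginv_Apow opprK; left.
- by left; exists i => //; rewrite ginv_Tg; right; right.
- by right; exists j => //; rewrite ginv_Epow; right.
- by right; exists j => //; rewrite ginv_Epow opprK; left.
Qed.

Lemma isgen_S0 i : (i < size S0)%N -> isgen (nth gone S0 i).
Proof.
rewrite size_S0 => Hi; rewrite nth_S0 // /gen.
case: ifP => H1; first by left; exists i => //; left.
case: ifP => H2.
  by left; exists (i - r)%N; [lia | right; right].
by right; exists (i - r - r)%N; [lia | left].
Qed.

Lemma isgen_letter l : (l.1 < size S0)%N -> isgen (letter S0 l).
Proof.
move=> Hl; rewrite /letter; case: l.2; last exact: isgen_S0.
exact/isgen_inv/isgen_S0.
Qed.

Lemma ball_Apow i : (i < r)%N -> ball S0 1 (Apow i 1).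
Proof.
move=> Hi; have := @ball_gen _ S0 i; rewrite size_S0 nth_S0; last by lia.
rewrite /gen Hi; apply; lia.
Qed.

Lemma ball_Tg i : (i < r)%N -> ball S0 1 (Tg i).
Proof.
move=> Hi; have := @ball_gen _ S0 (r + i); rewrite size_S0 nth_S0; last by lia.
rewrite /gen ifF; last by lia.
rewrite ifT; last by lia.
rewrite addKn; apply; lia.
Qed.

Lemma ball_Epow j : (j < s)%N -> ball S0 1 (Epow j 1).
Proof.
move=> Hj; have := @ball_gen _ S0 (r + r + j); rewrite size_S0 nth_S0; last by lia.
rewrite /gen ifF; last by lia.
rewrite ifF; last by lia.
have -> : (r + r + j - r - r = j)%N by lia.
apply; lia.
Qed.

Lemma ball_isgen g : isgen g -> ball S0 1 g.
Proof.
case=> [[i Hi [->|[->|->]]]|[j Hj [->|->]]].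
- exact: ball_Apow.
- by have := ball_inv (ball_Apow Hi); rewrite ginv_Apow.
- exact: ball_Tg.
- exact: ball_Epow.
- by have := ball_inv (ball_Epow Hj); rewrite ginv_Epow.
Qed.

End Concrete.

Lemma sum_change n (f f' : 'I_n -> nat) (i : 'I_n) :
  (forall p, p != i -> f' p = f p) ->
  (\sum_(p < n) f' p + f i = \sum_(p < n) f p + f' i)%N.
Proof.
move=> H; rewrite (bigD1 i) //= [(\sum_(p < n) f p)%N](bigD1 i) //=.
rewrite (eq_bigr f) => [|p /H //]; lia.
Qed.

Lemma arith3 a b c d e : (a + c = b + d -> a + e + c = b + e + d)%N.
Proof. lia. Qed.

Lemma arith4 a b c d e : (a + c = b + d -> e + a + c = e + b + d)%N.
Proof. lia. Qed.

Section Norms.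
Variables r s : nat.
Local Notation K := (Kgrp r s).

Lemma Apow_mul (i : 'I_r) z (x : K) :
  gmul (Apow r s i z) x =
  ((fun p => if p == i then dmul (z, false) (x.1 p) else x.1 p), x.2).
Proof.
rewrite Kmul_eq /Apow /=; congr pair; last by rewrite add0r.
apply: functional_extensionality => p; rewrite /mmul.
by case: (p =P i) => [->|/eqP Hne]; rewrite ?eqxx // ifF ?dmul1 //; apply/negbTE.
Qed.

Lemma Tg_mul (i : 'I_r) (x : K) :
  gmul (Tg r s i) x =
  ((fun p => if p == i then dmul (0%R, true) (x.1 p) else x.1 p), x.2).
Proof.
rewrite Kmul_eq /Tg /=; congr pair; last by rewrite add0r.
apply: functional_extensionality => p; rewrite /mmul.
by case: (p =P i) => [->|/eqP Hne]; rewrite ?eqxx // ifF ?dmul1 //; apply/negbTE.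
Qed.

Lemma Epow_mul (j : 'I_s) z (x : K) :
  gmul (Epow r s j z) x =
  (x.1, \row_q (if q == j then z + x.2 ord0 q else x.2 ord0 q)).
Proof.
rewrite Kmul_eq /Epow /=; congr pair.
- apply: functional_extensionality => p; exact: dmul1.
- apply/matrixP => a q; rewrite !mxE (ord1 a).
  by case: (q =P j) => [->|/eqP Hne]; rewrite ?eqxx // ifF ?add0r //; apply/negbTE.
Qed.

Lemma knorm_Apow (i : 'I_r) z (x : K) :
  (knorm (gmul (Apow r s i z) x) + dnorm (x.1 i) =
   knorm x + dnorm (dmul (z, false) (x.1 i)))%N.
Proof.
rewrite Apow_mul /knorm /=.
have := @sum_change _ (fun p => dnorm (x.1 p))
  (fun p => dnorm (if p == i then dmul (z, false) (x.1 p) else x.1 p)) i.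
move=> H; have := H (fun p Hp => ltac:(by rewrite (negbTE Hp))); rewrite eqxx; apply: arith3.
Qed.

Lemma knorm_Tg (i : 'I_r) (x : K) :
  (knorm (gmul (Tg r s i) x) + dnorm (x.1 i) =
   knorm x + dnorm (dmul (0%R, true) (x.1 i)))%N.
Proof.
rewrite Tg_mul /knorm /=.
have := @sum_change _ (fun p => dnorm (x.1 p))
  (fun p => dnorm (if p == i then dmul (0%R, true) (x.1 p) else x.1 p)) i.
move=> H; have := H (fun p Hp => ltac:(by rewrite (negbTE Hp))); rewrite eqxx; apply: arith3.
Qed.

Lemma knorm_Epow (j : 'I_s) z (x : K) :
  (knorm (gmul (Epow r s j z) x) + absz (x.2 ord0 j) =
   knorm x + absz (z + x.2 ord0 j)%R)%N.
Proof.
rewrite Epow_mul /knorm /=.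
have := @sum_change _ (fun q => absz (x.2 ord0 q))
  (fun q => absz ((\row_q0 (if q0 == j then z + x.2 ord0 q0 else x.2 ord0 q0)) ord0 q)) j.
move=> H; have := H (fun p Hp => ltac:(by rewrite mxE (negbTE Hp))); rewrite mxE eqxx; apply: arith4.
Qed.

Lemma knorm_gen (g x : K) : isgen g -> (knorm (gmul g x) <= (knorm x).+1)%N.
Proof.
case=> [[i Hi Hg]|[j Hj Hg]].
- pose io := Ordinal Hi.
  have E1 : Apow r s i = Apow r s io by [].
  have E2 : Tg r s i = Tg r s io by [].
  case: Hg => [->|[->|->]]; rewrite ?E1 ?E2.
  + have := knorm_Apow io 1 x; case: (x.1 io) => k b; rewrite /dnorm /dmul /=; lia.
  + have := knorm_Apow io (-1) x; case: (x.1 io) => k b; rewrite /dnorm /dmul /=; lia.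
  + have := knorm_Tg io x; case: (x.1 io) => k b; rewrite /dnorm /dmul /=.
    case: b => /=; lia.
- pose jo := Ordinal Hj.
  have E1 : Epow r s j = Epow r s jo by [].
  case: Hg => ->; rewrite E1; have := knorm_Epow jo (-1) x; have := knorm_Epow jo 1 x; lia.
Qed.

Lemma ball_knorm n (x : K) : ball (S0 r s) n x -> (knorm x <= n)%N.
Proof.
move=> [w [H1 H2 <-]]; elim: w n H1 H2 => [|l w IH] n /=.
- move=> _ _; rewrite /knorm (@big1 _ _ _ _ _ _ (fun p => dnorm ((gone : K).1 p))) //.
  by rewrite big1 // => p _; rewrite mxE.
- move=> /andP [Hl Hw]; case: n => // n Hs.
  apply: leq_trans (knorm_gen _ (isgen_letter Hl)) _; rewrite ltnS; exact: IH.
Qed.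

Lemma knorm_dec (x : K) : x <> gone ->
  exists g, isgen g /\ (knorm (gmul g x) < knorm x)%N.
Proof.
move=> Hx.
case: (classic (exists p, (x.1 p).2 = true)) => [[p Hp]|Hb].
  exists (Tg r s p); split; first by left; exists (val p); [exact: ltn_ord | right; right].
  have := knorm_Tg p x; case: (x.1 p) Hp => k b /= ->; rewrite /dnorm /dmul /=; lia.
case: (classic (exists p, (x.1 p).1 != 0)) => [[p Hp]|Hk].
  have Hb' : (x.1 p).2 = false by apply/negP => H; apply: Hb; exists p.
  case: (ltrP 0 (x.1 p).1) => Hpos.
  + exists (Apow r s p (-1)); split; first by left; exists (val p); [exact: ltn_ord | right; left].
    have := knorm_Apow p (-1) x; case: (x.1 p) Hb' Hpos => k b /= -> ?.
    rewrite /dnorm /dmul /=; lia.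
  + exists (Apow r s p 1); split; first by left; exists (val p); [exact: ltn_ord | left].
    have := knorm_Apow p 1 x; case: (x.1 p) Hb' Hpos Hp => k b /= -> ??.
    rewrite /dnorm /dmul /=; lia.
case: (classic (exists j, x.2 ord0 j != 0)) => [[j Hj]|Hv].
  case: (ltrP 0 (x.2 ord0 j)) => Hpos.
  + exists (Epow r s j (-1)); split; first by right; exists (val j); [exact: ltn_ord | right].
    have := knorm_Epow j (-1) x; lia.
  + exists (Epow r s j 1); split; first by right; exists (val j); [exact: ltn_ord | left].
    have := knorm_Epow j 1 x; lia.
exfalso; apply: Hx; rewrite Kone_eq; case: x Hb Hk Hv => m v /= Hb Hk Hv.
congr pair.
- apply: functional_extensionality => p; rewrite /mone /done.
  case E: (m p) => [k b]; congr pair.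
  + by apply/eqP; apply: contraT => H; case: Hk; exists p; rewrite E.
  + by apply/negP => H; apply: Hb; exists p; rewrite E.
- apply/matrixP => a q; rewrite (ord1 a) mxE; apply/eqP.
  by apply: contraT => H; case: Hv; exists q.
Qed.

Lemma knorm_ball (x : K) : ball (S0 r s) (knorm x) x.
Proof.
move: {2}(knorm x) (leqnn (knorm x)) => n; elim: n x => [|n IH] x Hn.
- have -> : x = gone.
    apply: NNPP => Hx; have [g [_ Hg]] := knorm_dec Hx; lia.
  exact: ball_one.
- case: (classic (x = gone)) => [->|Hx]; first exact: ball_one.
  have [g [Hg Hlt]] := knorm_dec Hx.
  have E : x = gmul (ginv g) (gmul g x) by rewrite gmulK.
  apply: (@ball_mon _ _ (1 + knorm (gmul g x))); first lia.
  rewrite {2}E; apply: ball_mul; first exact: ball_isgen (isgen_inv Hg).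
  apply: IH; lia.
Qed.

Lemma S0_gen : generates (S0 r s).
Proof. move=> x; exists (knorm x); exact: knorm_ball. Qed.

End Norms.

Section Upper.
Variables r s' : nat.
Local Notation s := s'.+1.
Local Notation K := (Kgrp r s).

Definition E0 (d : int) : 'rV[int]_s := \row_q (if q == ord0 then d else 0).

Lemma vsum_ge (v : 'rV[int]_s) q : (absz (v ord0 q) <= \sum_(j < s) absz (v ord0 j))%N.
Proof. by rewrite (bigD1 q) //= leq_addr. Qed.

Lemma smith_vec (v : 'rV[int]_s) : exists d : int, exists2 A : 'M[int]_s,
  A \in unitmx & (v *m A = E0 d /\ (absz d <= \sum_(j < s) absz (v ord0 j))%N).
Proof.
have [L uL [R uR [dd _ Ev]]] := int_Smith_normal_form v.
exists (L ord0 ord0 * dd`_0); exists (invmx R); first by rewrite unitmx_inv.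
have E1 : v *m invmx R = E0 (L ord0 ord0 * dd`_0).
  rewrite Ev mulmxK //; apply/matrixP => a q; rewrite (ord1 a) !mxE big_ord1 !mxE.
  case: q => [[|q'] Hq'] /=; first by rewrite mulr1n.
  by rewrite mulr0n mulr0.
split=> //.
set d := L ord0 ord0 * dd`_0 in E1 *.
have Ev' : v = E0 d *m R by rewrite -E1 mulmxKV.
have Eq q : v ord0 q = d * R ord0 q.
  rewrite Ev' !mxE (bigD1 ord0) //= big1 ?addr0; first by rewrite mxE eqxx.
  by move=> k /negbTE Hk; rewrite mxE Hk mul0r.
case: (d =P 0) => [->|/eqP dnz]; first by rewrite absz0.
have [q Hq] : exists q, v ord0 q != 0.
  apply: NNPP => H; move: dnz; apply/negP; rewrite negbK.
  have : E0 d = 0.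
    rewrite -E1; have -> : v = 0.
      apply/matrixP => a q; rewrite (ord1 a) mxE; apply/eqP; apply: contraT => Hq.
      by case: H; exists q.
    by rewrite mul0mx.
  by move/matrixP => /(_ ord0 ord0); rewrite !mxE eqxx => ->.
apply: leq_trans (vsum_ge v q); rewrite Eq abszM; move: Hq; rewrite Eq mulf_eq0 negb_or.
by case/andP => _ HR; rewrite -{1}(muln1 (absz d)) leq_mul2l; apply/orP; right; lia.
Qed.

Definition sd (v : 'rV[int]_s) : int :=
  proj1_sig (constructive_indefinite_description _ (smith_vec v)).

Lemma sdP (v : 'rV[int]_s) : exists2 A : 'M[int]_s,
  A \in unitmx & (v *m A = E0 (sd v) /\ (absz (sd v) <= \sum_(j < s) absz (v ord0 j))%N).
Proof. rewrite /sd; case: constructive_indefinite_description => //. Qed.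

Definition PhiA (A : 'M[int]_s) (x : K) : K := (x.1, x.2 *m A).

Lemma PhiA_aut A : A \in unitmx -> is_aut (PhiA A).
Proof.
move=> uA; split.
- by move=> x y; rewrite /PhiA /= mulmxDl.
- exists (PhiA (invmx A)) => x; rewrite /PhiA /=.
  + by rewrite mulmxK //; case: x.
  + by rewrite mulmxKV //; case: x.
Qed.

Lemma aut_E0 (x : K) : aut_equiv x (x.1, E0 (sd x.2)).
Proof.
have [A uA [EA _]] := sdP x.2.
by exists (PhiA A); split; [exact: PhiA_aut | rewrite /PhiA EA].
Qed.

Definition codeT N := ({ffun 'I_r -> bool * bool * 'I_N.+1} * (bool * 'I_N.+1))%type.

Definition code N (x : K) : codeT N :=
  ([ffun p => ((x.1 p).2, (x.1 p).1 < 0, inord (absz (x.1 p).1))],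
   (sd x.2 < 0, inord (absz (sd x.2)))).

Lemma card_codeT N : (#|{: codeT N}| = 2 * 4 ^ r * N.+1 ^ r.+1)%N.
Proof.
rewrite card_prod card_ffun !card_prod !card_bool !card_ord expnMn expnS.
by rewrite [(4 ^ r * _)%N]mulnC; lia.
Qed.

Lemma int_eq_abs (a b : int) : (a < 0) = (b < 0) -> absz a = absz b -> a = b.
Proof. move=> H1 H2; lia. Qed.

Lemma code_ok N (x y : K) : ball (S0 r s) N x -> ball (S0 r s) N y ->
  code N x = code N y -> aut_equiv x y.
Proof.
move=> /ball_knorm Hx /ball_knorm Hy [Ef Es Ed].
have bnd (z : K) p : (knorm z <= N)%N -> (absz (z.1 p).1 < N.+1)%N.
  move=> Hz; rewrite ltnS; apply: leq_trans Hz; rewrite /knorm.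
  apply: leq_trans (leq_addr _ _); apply: leq_trans (_ : dnorm (z.1 p) <= _)%N.
    by rewrite /dnorm leq_addr.
  by rewrite (bigD1 p) //= leq_addr.
have bnd2 (z : K) : (knorm z <= N)%N -> (absz (sd z.2) < N.+1)%N.
  move=> Hz; rewrite ltnS; apply: leq_trans Hz; have [_ _ [_ H]] := sdP z.2.
  by apply: leq_trans H _; rewrite /knorm leq_addl.
have E1 : x.1 = y.1.
  apply: functional_extensionality => p.
  have := Ef; move/ffunP/(_ p); rewrite !ffunE => -[Eb Esg Eab].
  have Eab' : absz (x.1 p).1 = absz (y.1 p).1.
    by have := congr1 (@nat_of_ord _) Eab; rewrite !inordK // ?bnd.
  case: (x.1 p) (y.1 p) Eb Esg Eab' => k b [k' b'] /= -> Hs Ha.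
  by rewrite (int_eq_abs Hs Ha).
have E2 : sd x.2 = sd y.2.
  apply: int_eq_abs => //; have := congr1 (@nat_of_ord _) Ed; rewrite !inordK // ?bnd2 //.
apply: aut_trans (aut_E0 x) _; rewrite E1 E2; apply: aut_sym; exact: aut_E0.
Qed.

Lemma upper_bound : exists C, forall N, exists (T : finType) (cd : K -> T),
      (#|T| <= C * (N.+1) ^ r.+1)%N /\
      forall x y, ball (S0 r s) N x -> ball (S0 r s) N y -> cd x = cd y -> aut_equiv x y.
Proof.
exists (2 * 4 ^ r)%N => N; exists (codeT N), (code N); split.
- by rewrite card_codeT.
- exact: code_ok.
Qed.

End Upper.

Section Invariants.
Variable G : Grp.
Definition npow (x : G) n := iter n (gmul x) gone.
Definition gconj (x g : G) := gmul (ginv g) (gmul x g).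
Definition isPow (y : G) d := exists z, npow z d = y.
Definition Vinv (x : G) d := exists g, isPow (gmul x (gconj x g)) d.
Definition Uinv (x : G) d := exists g,
  gmul (ginv x) (gconj x g) <> gone /\ isPow (gmul (ginv x) (gconj x g)) d.

Lemma hom_npow (f : G -> G) z n : is_hom f -> f (npow z n) = npow (f z) n.
Proof.
move=> hf; elim: n => [|n IH] /=; first exact: hom_one.
by rewrite hf IH.
Qed.

Lemma hom_gconj (f : G -> G) x g : is_hom f -> f (gconj x g) = gconj (f x) (f g).
Proof. by move=> hf; rewrite /gconj !hf hom_inv. Qed.

Lemma Vinv_aut x y d : aut_equiv x y -> Vinv x d -> Vinv y d.
Proof.
move=> [f [[hf bf] <-]] [g [z Hz]]; exists (f g), (f z).
by rewrite -hom_npow // Hz hf hom_gconj.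
Qed.

Lemma Uinv_aut x y d : aut_equiv x y -> Uinv x d -> Uinv y d.
Proof.
move=> [f [[hf bf] <-]] [g [Hne [z Hz]]]; exists (f g); split.
- rewrite -hom_gconj // -hom_inv // -hf => E; apply: Hne.
  by apply: (bij_inj bf); rewrite E hom_one.
- by exists (f z); rewrite -hom_npow // Hz hf hom_gconj // hom_inv.
Qed.
End Invariants.

Lemma dpow_rot (l : int) n : iter n (dmul (l, false)) done = (l *+ n, false).
Proof.
elim: n => [|n IH] /=; first by rewrite mulr0n.
by rewrite IH /dmul /= mulrS.
Qed.

Lemma dpow_refl (l : int) n :
  iter n (dmul (l, true)) done = if odd n then (l, true) else done.
Proof.
elim: n => [|n IH] //=; rewrite IH; case: (odd n) => /=.
- by rewrite /dmul /= addrN.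
- by rewrite /dmul /= oppr0 addr0.
Qed.

Lemma dconj (k : int) (g : int * bool) :
  dmul (dinv g) (dmul (k, false) g) = (if g.2 then - k else k, false).
Proof. case: g => l [] /=; rewrite /dmul /dinv /=; congr pair; ring. Qed.

Section Lower.
Variables r s' : nat.
Local Notation s := s'.+1.
Local Notation K := (Kgrp r s).

Lemma npow_K (z : K) n :
  npow z n = ((fun p => iter n (dmul (z.1 p)) done), z.2 *+ n).
Proof.
elim: n => [|n IH] /=.
- by rewrite mulr0n.
- by rewrite IH /= mulrS.
Qed.

Definition istrans (x : K) := forall p, (x.1 p).2 = false.

Lemma trans_V (x g : K) : istrans x ->
  gmul x (gconj x g) =
  ((fun p => if (g.1 p).2 then done else ((x.1 p).1 + (x.1 p).1, false)), x.2 + x.2).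
Proof.
move=> Hx; rewrite /gconj Kmul_eq Kmul_eq Kinv_eq Kmul_eq /=; congr pair.
- apply: functional_extensionality => p; rewrite /mmul /minv.
  case E: (x.1 p) (Hx p) => [k b] /= ->; rewrite dconj.
  by case: (g.1 p).2; rewrite /dmul /= ?addrN.
- by rewrite [x.2 + g.2]addrC addKr.
Qed.

Lemma trans_U (x g : K) : istrans x ->
  gmul (ginv x) (gconj x g) =
  ((fun p => if (g.1 p).2 then (- ((x.1 p).1 + (x.1 p).1), false) else done), 0).
Proof.
move=> Hx; rewrite /gconj Kmul_eq Kmul_eq Kinv_eq Kmul_eq Kinv_eq /=; congr pair.
- apply: functional_extensionality => p; rewrite /mmul /minv.
  case E: (x.1 p) (Hx p) => [k b] /= ->; rewrite dconj.
  case: (g.1 p).2; rewrite /dmul /dinv /=; congr pair; ring.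
- by rewrite [x.2 + g.2]addrC addKr addNr.
Qed.

Lemma absz_mulrn (z : int) n : absz (z *+ n) = (absz z * n)%N.
Proof. by rewrite -mulr_natr abszM natz absz_nat. Qed.

Lemma mxMn (A : 'rV[int]_s) n i j : (A *+ n) i j = A i j *+ n.
Proof.
elim: n => [|n IH]; first by rewrite !mulr0n mxE.
by rewrite !mulrS mxE IH.
Qed.

Lemma V_inv (x : K) d : istrans x -> Vinv x d -> (d %| absz (x.2 ord0 ord0 + x.2 ord0 ord0)%R)%N.
Proof.
move=> Hx [g [z Hz]]; move: Hz; rewrite trans_V // npow_K => -[_ E2].
have := congr1 (fun v : 'rV_s => v ord0 ord0) E2; rewrite /= mxMn mxE => <-.
by rewrite absz_mulrn dvdn_mull.
Qed.

Lemma U_inv (x : K) d : istrans x -> Uinv x d ->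
  exists p, (d %| absz ((x.1 p).1 + (x.1 p).1)%R)%N \/ (x.1 p).1 = 0.
Proof.
move=> Hx [g [Hne [z Hz]]]; move: Hz; rewrite trans_U // npow_K => -[E1 _].
have [p Hp] : exists p, (g.1 p).2 = true.
  apply: NNPP => H; apply: Hne; rewrite trans_U // Kone_eq; congr pair.
  apply: functional_extensionality => p; case E: (g.1 p).2 => //.
  by case: H; exists p.
exists p; have := congr1 (fun f => f p) E1; rewrite /= Hp.
case: (z.1 p) => l [].
- rewrite dpow_refl; case: (odd d) => //= -[] H; right; lia.
- rewrite dpow_rot => -[E]; left; rewrite -abszN -E absz_mulrn dvdn_mull //.
Qed.

Variable M : nat.
Definition famT := ({ffun 'I_r -> 'I_M} * 'I_M)%type.
Definition kk (pf : {ffun 'I_r -> 'I_M}) (q : 'I_r) : nat := (r * M + q * M + pf q + 1)%N.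
Definition hfam (a : famT) : K :=
  ((fun q => ((kk a.1 q)%:Z, false)), E0 s' (a.2.+1)%:Z).

Lemma hfam_trans a : istrans (hfam a).
Proof. by []. Qed.

Lemma V_fam a : Vinv (hfam a) (absz ((a.2.+1)%:Z + (a.2.+1)%:Z)).
Proof.
exists ((fun _ => (0, true)), 0); exists ((@mone r), E0 s' 1).
rewrite trans_V // npow_K /=; congr pair.
- apply: functional_extensionality => p; rewrite /mone.
  by rewrite -[done]/(0%R, false) dpow_rot mul0rn.
- apply/matrixP => i j; rewrite (ord1 i) mxMn !mxE; case: (j == ord0) => //=.
  + by rewrite natz; lia.
  + by rewrite mul0rn addr0.
Qed.

Lemma U_fam a q : Uinv (hfam a) (absz ((kk a.1 q)%:Z + (kk a.1 q)%:Z)).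
Proof.
exists ((fun p => (0, p == q)), 0); split.
- rewrite trans_U // Kone_eq => -[] /(congr1 (fun f => f q)); rewrite /= eqxx.
  rewrite /mone /done => -[] /eqP; rewrite oppr_eq0 /kk; lia.
- exists ((fun p => if p == q then (-1, false) else done), 0).
  rewrite trans_U // npow_K /=; congr pair; last by rewrite mul0rn.
  apply: functional_extensionality => p.
  case: (p =P q) => [->|_].
  + rewrite dpow_rot; congr pair; rewrite -mulr_natr; lia.
  + by rewrite -[done]/(0%R, false) dpow_rot mul0rn.
Qed.

End Lower.

Lemma divmod_uniq M q p x y : (x < M)%N -> (y < M)%N ->
  (q * M + x = p * M + y)%N -> q = p /\ x = y.
Proof.
move=> Hx Hy E; have M0 : (0 < M)%N by lia.
have := congr1 (divn^~ M) E; rewrite /= !divnMDl // !divn_small // !addn0 => Eq.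
by split=> //; subst; lia.
Qed.

Lemma arith_kk r M q p x y : (q < r)%N -> (p < r)%N -> (x < M)%N -> (y < M)%N ->
  (r * M + q * M + x + 1 %| r * M + p * M + y + 1)%N -> q = p /\ x = y.
Proof.
move=> Hq Hp Hx Hy /dvdnP [c Hc].
have Bq : (p * M + y + 1 <= r * M)%N.
  have : (p.+1 * M <= r * M)%N by rewrite leq_mul2r Hp orbT.
  rewrite mulSn; lia.
case: c Hc => [|[|c]] Hc; first lia.
- apply: divmod_uniq Hx Hy _; lia.
- exfalso; move: Hc; rewrite !mulSn; lia.
Qed.

Lemma abs_double n : absz (n%:Z + n%:Z) = (2 * n)%N.
Proof. by rewrite -PoszD absz_nat mul2n addnn. Qed.

Section LowerFinal.
Variables r s' : nat.
Local Notation s := s'.+1.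
Local Notation K := (Kgrp r s).

Lemma hfam_inj M (a b : famT r M) :
  aut_equiv (hfam s' a) (hfam s' b) -> a = b.
Proof.
move=> Hab.
have E2 : a.2 = b.2.
  have V1 := V_inv (hfam_trans s' b) (Vinv_aut Hab (V_fam s' a)).
  have V2 := V_inv (hfam_trans s' a) (Vinv_aut (aut_sym Hab) (V_fam s' b)).
  move: V1 V2; rewrite /hfam /= /E0 !mxE eqxx !abs_double.
  rewrite !addnn -!mul2n !dvdn_pmul2l // => V1 V2.
  apply: val_inj => /=; have : (a.2.+1 == b.2.+1) by rewrite eqn_dvd V1 V2.
  by move/eqP => [].
have E1 : a.1 = b.1.
  apply/ffunP => q.
  have [p [Hp|Hp]] := U_inv (hfam_trans s' b) (Uinv_aut Hab (U_fam s' a q)); last first.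
    by move: Hp; rewrite /hfam /= /kk; lia.
  move: Hp; rewrite /hfam /= !addnn -!mul2n dvdn_pmul2l // /kk => Hd.
  have [Eq Ex] := arith_kk (ltn_ord q) (ltn_ord p) (ltn_ord (a.1 q)) (ltn_ord (b.1 p)) Hd.
  have Eqp : q = p by apply: val_inj.
  by subst p; apply: val_inj.
by case: a b E1 E2 {Hab} => [a1 a2] [b1 b2] /= -> ->.
Qed.

Lemma knorm_hfam M (a : famT r M) : (knorm (hfam s' a) <= (2 * r * r + 1) * M)%N.
Proof.
rewrite /knorm /hfam /=.
have H1 : (\sum_(p < r) dnorm ((kk a.1 p)%:Z, false) <= r * (2 * r * M))%N.
  apply: leq_trans (_ : \sum_(p < r) (2 * r * M) <= _)%N.
    apply: leq_sum => p _; rewrite /dnorm /= addn0 /kk.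
    have := ltn_ord p; have := ltn_ord (a.1 p) => Hx Hp.
    have : (p.+1 * M <= r * M)%N by rewrite leq_mul2r Hp orbT.
    rewrite mulSn; lia.
  by rewrite big_const_ord iter_addn_0 mulnC.
have H2 : (\sum_(j < s) absz (E0 s' (a.2.+1)%:Z ord0 j) = a.2.+1)%N.
  rewrite (bigD1 ord0) //= big1 ?addn0; first by rewrite mxE eqxx absz_nat.
  by move=> j /negbTE Hj; rewrite mxE Hj.
rewrite H2; apply: leq_trans (leq_add H1 (ltn_ord a.2)) _; apply: eq_leq; ring.
Qed.

Lemma lower_bound : exists C, forall M, exists (T : finType) (h : T -> K),
      [/\ (M ^ r.+1 <= #|T|)%N, forall a, ball (S0 r s) (C * M) (h a)
        & forall a b, aut_equiv (h a) (h b) -> a = b].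
Proof.
exists (2 * r * r + 1)%N => M; exists (famT r M), (@hfam r s' M); split.
- by rewrite card_prod card_ffun !card_ord expnS mulnC.
- move=> a; apply: ball_mon (knorm_ball _); exact: knorm_hfam.
- exact: hfam_inj.
Qed.

Theorem concrete_rate : autgrowth_rate_sim K (fun n => n ^ r.+1)%N.
Proof.
apply: (@rate_from_bounds _ (S0 r s)); [exact: S0_gen | exact: upper_bound | exact: lower_bound].
Qed.

End LowerFinal.

Section Zpow.
Variable G : Grp.
Implicit Types x y c : G.

Definition zpow x (k : int) : G :=
  match k with Posz n => npow x n | Negz n => npow (ginv x) n.+1 end.

Lemma zpowS x k : gmul x (zpow x k) = zpow x (1 + k).
Proof.
case: k => n /=.
- by rewrite add0n.
- rewrite gmulKV; case: n => [|n] /=.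
  + by [].
  + by rewrite subn1.
Qed.

Lemma zpowN1 x k : gmul (ginv x) (zpow x k) = zpow x (-1 + k).
Proof.
have E : zpow x k = zpow x (1 + (-1 + k)) by congr zpow; ring.
by rewrite E -zpowS gmulK.
Qed.

Lemma zpow0 x : zpow x 0 = gone.
Proof. by []. Qed.

Definition comm c y := gmul c y = gmul y c.

Lemma comm1 c : comm c gone.
Proof. by rewrite /comm gmul1 gmulr1. Qed.

Lemma commM c y z : comm c y -> comm c z -> comm c (gmul y z).
Proof. by move=> H1 H2; rewrite /comm gmulA H1 -gmulA H2 gmulA. Qed.

Lemma commV c y : comm c y -> comm c (ginv y).
Proof.
move=> H; move: (congr1 (fun z => gmul (ginv y) (gmul z (ginv y))) H) => /=.
by rewrite -!gmulA gmulVr gmulr1 gmulK /comm => ->.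
Qed.

Lemma comm_npow c y n : comm c y -> comm c (npow y n).
Proof. by move=> H; elim: n => [|n IH] /=; [exact: comm1 | exact: commM]. Qed.

Lemma comm_zpow c y k : comm c y -> comm c (zpow y k).
Proof. move=> H; case: k => n /=; first exact: (comm_npow n H). exact: (comm_npow n.+1 (commV H)). Qed.

Lemma commC c y : comm c y -> comm y c.
Proof. by []. Qed.

Lemma conj_npow t y y' n : gmul t y = gmul y' t ->
  gmul t (npow y n) = gmul (npow y' n) t.
Proof.
move=> H; elim: n => [|n IH] /=; first by rewrite gmul1 gmulr1.
by rewrite gmulA H -gmulA IH gmulA.
Qed.

Lemma conj_zpow t a k : gmul t a = gmul (ginv a) t ->
  gmul t (ginv a) = gmul a t ->
  gmul t (zpow a k) = gmul (zpow a (- k)) t.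
Proof.
move=> H1 H2; case: k => [[|n]|n].
- by rewrite /= gmul1 gmulr1.
- have -> : (- (Posz n.+1) = Negz n)%R by rewrite NegzE.
  exact: (conj_npow n.+1 H1).
- have -> : (- (Negz n) = Posz n.+1)%R by rewrite NegzE opprK.
  exact: (conj_npow n.+1 H2).
Qed.

Lemma foldr_prod_ext (I : eqType) (F F' : I -> G) (l : seq I) :
  (forall p, p \in l -> F p = F' p) ->
  foldr (fun p acc => gmul (F p) acc) gone l = foldr (fun p acc => gmul (F' p) acc) gone l.
Proof.
elim: l => [|p l IH] H //=; rewrite H ?mem_head // IH // => q Hq.
by rewrite H // inE Hq orbT.
Qed.

Lemma prod_update (I : eqType) (c : G) (F F' : I -> G) (i : I) (l : seq I) :
  uniq l -> i \in l ->
  (forall p, p != i -> comm c (F p)) ->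
  (forall p, p != i -> F' p = F p) ->
  F' i = gmul c (F i) ->
  gmul c (foldr (fun p acc => gmul (F p) acc) gone l) =
  foldr (fun p acc => gmul (F' p) acc) gone l.
Proof.
move=> Hu Hi Hc HF Hi'; elim: l Hu Hi => [//|p l IH] /= /andP [Hp Hu].
rewrite inE; case: (p =P i) => [Epi|/eqP Hne] /= Hin.
- subst p; rewrite gmulA -Hi'; congr gmul; apply: foldr_prod_ext => q Hq.
  symmetry; apply: HF; apply: contraNneq Hp => <-; exact Hq.
- have Hil : i \in l by move: Hin; rewrite eq_sym (negbTE Hne).
  rewrite -(IH Hu Hil) (HF _ Hne).
  set X := foldr _ _ _.
  have E := Hc _ Hne; rewrite /comm in E.
  have E' : gmul c (F p) = gmul (F p) c := E.
  by rewrite (gmulA c) E' -gmulA.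
Qed.

End Zpow.

Section Pres.
Variables (r : nat) (G : Grp) (a t : 'I_r -> G).
Hypothesis Hpres : presents a t.

Definition Am (i : 'I_r) : Mgrp r := fun p => if p == i then (1, false) else done.
Definition Tm (i : 'I_r) : Mgrp r := fun p => if p == i then (0, true) else done.

Lemma Mrels : Grels Am Tm.
Proof.
split.
- move=> i j; apply: functional_extensionality => p; rewrite /= /mmul /Am.
  by case: (p == i); case: (p == j); rewrite /dmul /= ?addr0 ?add0r.
- move=> i j; apply: functional_extensionality => p; rewrite /= /mmul /Tm.
  by case: (p == i); case: (p == j); rewrite /dmul /= ?addr0 ?add0r ?oppr0.
- move=> i; apply: functional_extensionality => p; rewrite /= /mmul /Tm /mone.
  by case: (p == i); rewrite /dmul /= ?addr0 ?add0r ?oppr0.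
- move=> i j; apply: functional_extensionality => p; rewrite /= /mmul /minv /Tm /Am.
  case: (i =P j) => [<-|/eqP Hij].
  + by case: (p == i); rewrite /dmul /dinv /= ?addr0 ?add0r ?oppr0.
  + case: (p =P i) => [->|_]; first by rewrite (negbTE Hij) /dmul /dinv /= add0r addr0.
    by case: (p == j); rewrite /dmul /dinv /= ?addr0 ?add0r ?oppr0.
Qed.

Lemma f_exists : exists f : G -> Mgrp r,
  [/\ is_hom f, forall i, f (a i) = Am i & forall i, f (t i) = Tm i].
Proof. by case: Hpres => _ _ H; apply: H; exact: Mrels. Qed.

Lemma relA i j : comm (a i) (a j).
Proof. by case: Hpres => _ [H _ _ _] _; apply: H. Qed.
Lemma relT i j : comm (t i) (t j).
Proof. by case: Hpres => _ [_ H _ _] _; apply: H. Qed.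
Lemma tt1 i : gmul (t i) (t i) = gone.
Proof. by case: Hpres => _ [_ _ H _] _; apply: H. Qed.
Lemma tinv i : ginv (t i) = t i.
Proof. exact: inv_uniq (tt1 i). Qed.
Lemma rel4 i j : gmul (t i) (gmul (a j) (t i)) = if i == j then ginv (a i) else a j.
Proof. by case: Hpres => _ [_ _ _ H] _; rewrite -H tinv. Qed.

Lemma t_a_ne i j : i != j -> comm (t i) (a j).
Proof.
move=> Hij; have := rel4 i j; rewrite (negbTE Hij) => E.
have E2 : gmul (t i) (gmul (t i) (gmul (a j) (t i))) = gmul (t i) (a j) by rewrite E.
by rewrite gmulA tt1 gmul1 in E2; rewrite /comm E2.
Qed.

Lemma t_a_eq i : gmul (t i) (a i) = gmul (ginv (a i)) (t i).
Proof.
have := rel4 i i; rewrite eqxx => <-.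
by rewrite -!gmulA tt1 gmulr1.
Qed.

Lemma t_ainv i : gmul (t i) (ginv (a i)) = gmul (a i) (t i).
Proof.
have := rel4 i i; rewrite eqxx => E.
have E2 : gmul (gmul (t i) (ginv (a i))) (t i) = a i.
  by have := congr1 ginv E; rewrite ginvK !ginvM tinv.
by rewrite -[X in _ = gmul X _]E2 -gmulA tt1 gmulr1.
Qed.

Definition hfac (p : 'I_r) (kb : int * bool) : G :=
  gmul (zpow (a p) kb.1) (if kb.2 then t p else gone).

Definition gback (m : Mgrp r) : G :=
  foldr (fun p acc => gmul (hfac p (m p)) acc) gone (enum 'I_r).

Lemma gback_one : gback gone = gone.
Proof.
rewrite /gback; elim: (enum 'I_r) => [|p l IH] //=.
by rewrite IH /hfac /= !gmul1.
Qed.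

Lemma comm_hfac c p kb : comm c (a p) -> comm c (t p) -> comm c (hfac p kb).
Proof.
move=> H1 H2; apply: commM; first exact: comm_zpow.
by case: kb.2 => //; exact: comm1.
Qed.

Lemma gA i m : gback (gmul (Am i) m) = gmul (a i) (gback m).
Proof.
rewrite /gback; symmetry; apply: (prod_update (i := i)); rewrite ?enum_uniq ?mem_enum //.
- move=> p Hq; apply: comm_hfac; first exact: relA.
  by apply: commC; apply: t_a_ne.
- by move=> p Hq; rewrite /= /mmul /Am (negbTE Hq) dmul1.
- rewrite /= /mmul /Am eqxx /hfac /dmul /=; case: (m i) => k b /=.
  by rewrite gmulA zpowS.
Qed.

Lemma gAinv i m : gback (gmul (ginv (Am i)) m) = gmul (ginv (a i)) (gback m).
Proof.
rewrite /gback; symmetry; apply: (prod_update (i := i)); rewrite ?enum_uniq ?mem_enum //.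
- move=> p Hq; apply: comm_hfac.
  + by apply: commC; apply: commV; apply: commC; apply: relA.
  + by apply: commC; apply: commV; apply: t_a_ne.
- by move=> p Hq; rewrite /= /mmul /minv /Am (negbTE Hq) /dinv /= oppr0 dmul1.
- rewrite /= /mmul /minv /Am eqxx /hfac /dmul /dinv /=; case: (m i) => k b /=.
  by rewrite gmulA zpowN1.
Qed.

Lemma gT i m : gback (gmul (Tm i) m) = gmul (t i) (gback m).
Proof.
rewrite /gback; symmetry; apply: (prod_update (i := i)); rewrite ?enum_uniq ?mem_enum //.
- move=> p Hq; apply: comm_hfac; first by apply: t_a_ne; rewrite eq_sym.
  exact: relT.
- by move=> p Hq; rewrite /= /mmul /Tm (negbTE Hq) dmul1.
- rewrite /= /mmul /Tm eqxx /hfac /dmul /=; case: (m i) => k b /=.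
  rewrite add0r gmulA (conj_zpow _ (t_a_eq i) (t_ainv i)) -!gmulA; congr gmul.
  by case: b => /=; rewrite ?tt1 ?gmulr1.
Qed.

Section WithF.
Variable f : G -> Mgrp r.
Hypotheses (hf : is_hom f) (fa : forall i, f (a i) = Am i) (ft : forall i, f (t i) = Tm i).

Definition Qg (u : G) := forall m, gback (gmul (f u) m) = gmul u (gback m).

Lemma Qg_one : Qg gone.
Proof. by move=> m; rewrite hom_one // gmul1 gmul1. Qed.

Lemma Qg_inv u : Qg u -> Qg (ginv u).
Proof.
move=> H m; rewrite (hom_inv _ hf); apply: (@gmul_linj _ u).
by rewrite gmulKV -H gmulKV.
Qed.

Lemma Qg_nth_map (h : 'I_r -> G) (l : seq 'I_r) n :
  (forall i, Qg (h i)) -> Qg (nth gone (map h l) n).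
Proof.
move=> H; elim: l n => [|p l IH] [|n] //=; exact: Qg_one.
Qed.

Lemma gback_f x : gback (f x) = x.
Proof.
case: Hpres => gen _ _; have [n [w [_ _ <-]]] := gen x.
elim: w {n} => [|l w IH] /=; first by rewrite hom_one // gback_one.
rewrite hf; have Hl : Qg (letter ([seq a i | i <- enum 'I_r] ++ [seq t i | i <- enum 'I_r]) l).
  have Hn : Qg (nth gone ([seq a i | i <- enum 'I_r] ++ [seq t i | i <- enum 'I_r]) l.1).
    rewrite nth_cat; case: ifP => _; apply: Qg_nth_map => i.
    + by move=> m; rewrite fa gA.
    + by move=> m; rewrite ft gT.
  by rewrite /letter; case: l.2 => //; apply: Qg_inv.
by rewrite Hl IH.
Qed.
End WithF.

End Pres.

Section Virt.
Variables r s : nat.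
Local Notation K := (Kgrp r s).

Definition femb (v : ZnGrp (r + s)) : K :=
  ((fun q => (v ord0 (lshift s q), false)), \row_j v ord0 (rshift r j)).

Lemma split_l (q : 'I_r) : split (lshift s q) = inl q.
Proof. exact: (unsplitK (inl q : 'I_r + 'I_s)). Qed.
Lemma split_r (j : 'I_s) : split (rshift r j) = inr j.
Proof. exact: (unsplitK (inr j : 'I_r + 'I_s)). Qed.

Lemma virt_K : virt_abelian_rank K (r + s).
Proof.
exists femb; split.
- move=> v w; rewrite /femb Kmul_eq /=; congr pair.
  + apply: functional_extensionality => q; rewrite /mmul /dmul /= !mxE //.
  + by apply/matrixP => a j; rewrite !mxE.
- move=> v w E; apply/matrixP => a i; rewrite (ord1 a).
  case: (splitP i) => [q Eq|j Eq].
  + have -> : i = lshift s q by apply: val_inj.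
    by have := congr1 (fun x : K => (x.1 q).1) E.
  + have -> : i = rshift r j by apply: val_inj.
    by have := congr1 (fun x : K => x.2 ord0 j) E; rewrite /= !mxE.
- exists #|{: {ffun 'I_r -> bool}}|.
  exists (fun i => ((fun q => (0, (enum_val i : {ffun 'I_r -> bool}) q)), 0) : K).
  move=> [hm hv]; set h : K := (hm, hv).
  exists (enum_rank [ffun q => (h.1 q).2]).
  exists (\row_i (match split i with
                  | inl q => if (h.1 q).2 then - (h.1 q).1 else (h.1 q).1
                  | inr j => h.2 ord0 j end)).
  rewrite enum_rankK /femb Kmul_eq /=; congr pair.
  + apply: functional_extensionality => q.
    rewrite /mmul /dmul /= !mxE split_l ffunE.
    by rewrite /h /=; case: (hm q) => k [] /=; rewrite add0r ?opprK.
  + apply/matrixP => a j; rewrite (ord1 a) !mxE split_r add0r //.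
Qed.
End Virt.

Lemma part2 (m k : nat) : (0 < k)%N -> (k <= m)%N ->
   exists H : Grp, [/\ fin_gen H, virt_abelian_rank H m
                     & autgrowth_rate_sim H (fun n => (n ^ k)%N)].
Proof.
case: k => [//|k] _ Hkm.
exists (Kgrp k (m - k.+1).+1); split.
- by exists (S0 k (m - k.+1).+1); exact: S0_gen.
- have -> : m = (k + (m - k.+1).+1)%N by lia.
  by have := virt_K k (m - k.+1).+1; rewrite -!addSnnS subnKC //.
- exact: concrete_rate.
Qed.

Section Part1.
Variables (r : nat) (G : Grp) (a t : 'I_r -> G).
Hypothesis Hpres : presents a t.
Variable s : nat.
Variable f : G -> Mgrp r.
Hypotheses (hf : is_hom f) (fa : forall i, f (a i) = Am i) (ft : forall i, f (t i) = Tm i).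

Definition FF (x : prodGrp G (ZnGrp s)) : Kgrp r s := (f x.1, x.2).
Definition FFi (y : Kgrp r s) : prodGrp G (ZnGrp s) := (gback a t y.1, y.2).

Lemma FF_hom : is_hom FF.
Proof. by move=> x y; rewrite /FF /= hf. Qed.

Lemma FFK : cancel FF FFi.
Proof. by move=> [x v]; rewrite /FF /FFi /= (gback_f Hpres hf fa ft). Qed.

Lemma FF_gen n : exists u, FF u = nth gone (S0 r s) n.
Proof.
case: (ltnP n (r + r + s)) => Hn; last first.
  by exists gone; rewrite nth_default ?size_S0 // (hom_one FF_hom).
rewrite nth_S0 // /gen; case: ifP => H1.
  exists (a (Ordinal H1), 0); rewrite /FF /= fa /Am /Apow; congr pair.
case: ifP => H2.
  have H3 : (n - r < r)%N by lia.
  exists (t (Ordinal H3), 0); rewrite /FF /= ft /Tm /Tg; congr pair.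
exists (gone, (Epow r s (n - r - r) 1).2); rewrite /FF /= (hom_one hf) /Epow //.
Qed.

Lemma FF_surj y : exists x, FF x = y.
Proof.
have [n [w [_ _ <-]]] := S0_gen y.
elim: w {n} => [|l w [x Hx]] /=; first by exists (gone : prodGrp G (ZnGrp s)); rewrite (hom_one FF_hom).
have [u Hu] := FF_gen l.1.
rewrite /letter; case: l.2.
- by exists (gmul (ginv u) x); rewrite FF_hom (hom_inv _ FF_hom) Hu Hx.
- by exists (gmul u x); rewrite FF_hom Hu Hx.
Qed.

Lemma FFiK : cancel FFi FF.
Proof. by move=> y; have [x <-] := FF_surj y; rewrite FFK. Qed.

End Part1.

Lemma part1 (r : nat) (G : Grp) (a t : 'I_r -> G) : presents a t ->
   forall (s : nat), (0 < s)%N ->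
   autgrowth_rate_sim (prodGrp G (ZnGrp s)) (fun n => (n ^ r.+1)%N).
Proof.
move=> Hp [//|s'] _.
have [f [hf fa ft]] := f_exists Hp.
apply: (rate_transport (FF_hom (s:=s'.+1) hf) (FFK (s:=s'.+1) Hp hf fa ft) (FFiK (s:=s'.+1) Hp hf fa ft)).
exact: concrete_rate.
Qed.


Close Scope ring_scope.

Theorem mainTheorem1 :
  (forall (r : nat), (0 < r)%N ->
   forall (G : Grp) (a t : 'I_r -> G), presents a t ->
   forall (s : nat), (0 < s)%N ->
   autgrowth_rate_sim (prodGrp G (ZnGrp s)) (fun n => (n ^ r.+1)%N))
  /\
  (forall (m k : nat), (0 < k)%N -> (k <= m)%N ->
   exists H : Grp, [/\ fin_gen H, virt_abelian_rank H m
                     & autgrowth_rate_sim H (fun n => (n ^ k)%N)]).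
Proof.
split.
- move=> r _ G a t Hp s Hs; exact: part1 Hp s Hs.
- exact: part2.
Qed.
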